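(* Let $n\ge4$, let $c,\gamma\in\mathbb{F}_{2^n}\setminus\{0,1\}$, and let $F=\mathrm{Inv}\circ(0,1,\gamma)$. Then $3\le{}_c\Delta_F\le5$.
   Context: $\mathrm{Inv}(x)=x^{2^n-2}$ on $\mathbb{F}_{2^n}$. $(0,1,\gamma)$ is the $3$-cycle sending $0\mapsto1$, $1\mapsto\gamma$, $\gamma\mapsto0$ and fixing all other elements; thus $F(0)=1$, $F(1)=\gamma^{-1}$, $F(\gamma)=0$ and $F(x)=x^{-1}$ otherwise. For $c\in\mathbb{F}_{2^n}$, ${}_cD_aF(x)=F(x+a)+cF(x)$; ${}_c\Delta_F(a,b)$ is the number of $x\in\mathbb{F}_{2^n}$ with ${}_cD_aF(x)=b$; and ${}_c\Delta_F=\max\{{}_c\Delta_F(a,b): a,b\in\mathbb{F}_{2^n},\ a\neq 0 \text{ if } c=1\}$. *)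

(* Defs.v *)
From HB Require Import structures.
From mathcomp Require Import all_boot all_order all_algebra all_fingroup all_field.
Set Implicit Arguments. Unset Strict Implicit. Unset Printing Implicit Defensive.
Import GRing.Theory.
Local Open Scope ring_scope.

(* The field F_{2^n} is represented by an arbitrary finite field K with #|K| = 2^n
   (unique up to isomorphism). *)

(* Inv(x) = x^(2^n-2), i.e. x^{-1} for x <> 0 and 0 for x = 0;
   MathComp's field inverse satisfies 0^-1 = 0. *)
Definition Inv (K : fieldType) (x : K) : K := x^-1.

Definition cyc3 (K : fieldType) (g : K) (x : K) : K :=
  if x == 0 then 1 else if x == 1 then g else if x == g then 0 else x.

Definition Fswap (K : fieldType) (g : K) (x : K) : K := Inv (cyc3 g x).

Definition cDiff (K : finFieldType) (F : K -> K) (c a x : K) : K := F (x + a) + c * F x.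

Definition cDeltaAB (K : finFieldType) (F : K -> K) (c a b : K) : nat :=
  #|[set x : K | cDiff F c a x == b]|.

Definition cDelta (K : finFieldType) (F : K -> K) (c : K) : nat :=
  \max_(ab : K * K | (c != 1) || (ab.1 != 0)) cDeltaAB F c ab.1 ab.2.

(* Main.v *)
Require Import Defs.
From HB Require Import structures.
From mathcomp Require Import all_boot all_order all_algebra all_fingroup all_field.
From mathcomp Require Import ring.
Set Implicit Arguments. Unset Strict Implicit. Unset Printing Implicit Defensive.
Import GRing.Theory.
Local Open Scope ring_scope.
Lemma card_quad (K : finFieldType) (P : pred K) (al be ga : K) :
  (al != 0) || (be != 0) || (ga != 0) ->
  (forall x, P x -> al * x ^+ 2 + be * x + ga = 0) ->
  (#|[set x | P x]| <= 2)%N.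
Proof.
move=> nz hP.
pose p : {poly K} := \poly_(i < 3) (nth 0 [:: ga; be; al] i).
have p0 : p != 0.
  apply/negP => /eqP p0; move: nz.
  have := congr1 (fun q : {poly K} => q`_0) p0.
  have := congr1 (fun q : {poly K} => q`_1) p0.
  have := congr1 (fun q : {poly K} => q`_2) p0.
  by rewrite !coef_poly /= !coef0 => -> -> ->; rewrite eqxx.
have := max_poly_roots p0 (rs := enum [set x | P x]).
rewrite enum_uniq cardE.
have -> : all (root p) (enum [set x | P x]).
  apply/allP => x; rewrite mem_enum inE => /hP hx.
  rewrite /root /p horner_poly !big_ord_recr big_ord0 /= add0r expr0 expr1 mulr1.
  rewrite -hx; apply/eqP; ring.
move=> /(_ isT isT) h; have := leq_trans h (size_poly _ _); by [].
Qed.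

Section Upper.
Variables (K : finFieldType) (g c : K).
Hypotheses (H2 : 2%:R = 0 :> K) (g0 : g != 0) (g1 : g != 1) (c1 : c != 1).

Lemma cyc3_inj : injective (cyc3 g).
Proof.
have gg : (g == 0) = false by apply/negbTE.
have g1' : (g == 1) = false by apply/negbTE.
have o1 : ((1:K) == 0) = false by rewrite oner_eq0.
apply: (can_inj (g := fun x => cyc3 g (cyc3 g x))) => x; rewrite /cyc3.
case: (eqVneq x 0) => [->|x0]; first by rewrite ?eqxx ?o1 ?gg ?g1' ?eqxx ?o1 ?gg ?g1' ?eqxx ?o1 ?gg ?g1' ?eqxx.
case: (eqVneq x 1) => [->|x1]; first by rewrite ?eqxx ?o1 ?gg ?g1' ?eqxx ?o1 ?gg ?g1' ?eqxx ?o1 ?gg ?g1' ?eqxx.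
case: (eqVneq x g) => [->|xg]; first by rewrite ?eqxx ?o1 ?gg ?g1' ?eqxx ?o1 ?gg ?g1' ?eqxx ?o1 ?gg ?g1' ?eqxx.
by do 3 rewrite /= ?(negbTE x0) ?(negbTE x1) ?(negbTE xg).
Qed.

Lemma F_inj : injective (Fswap g).
Proof. by move=> x y /invr_inj /cyc3_inj. Qed.

Local Notation F := (Fswap g).

Lemma pair_excl a b x : a != 0 -> cDiff F c a x = b -> cDiff F c a (x + a) = b -> False.
Proof.
move=> a0; rewrite /cDiff -addrA.
have -> : a + a = 0 by rewrite -mulr2n -mulr_natl H2 mul0r.
rewrite addr0 => h1 h2.
have e : F x + c * F (x + a) = F (x + a) + c * F x by rewrite h1 h2.
have : (F x - F (x + a)) * (1 - c) = 0.
  transitivity ((F x + c * F (x + a)) - (F (x + a) + c * F x)); first ring.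
  by rewrite e subrr.
move/eqP; rewrite mulf_eq0 subr_eq0 (negbTE (_ : 1 - c != 0)); last by rewrite subr_eq0 eq_sym.
rewrite orbF => /eqP /F_inj h.
by move: a0; rewrite -(addKr x a) -h addNr eqxx.
Qed.

Definition inS (x : K) := (x == 0) || (x == 1) || (x == g).

Lemma cyc3_notS x : ~~ inS x -> cyc3 g x = x.
Proof. by rewrite /inS /cyc3 => /norP [/norP [/negbTE -> /negbTE ->] /negbTE ->]. Qed.

Lemma upper a b : (cDeltaAB F c a b <= 5)%N.
Proof.
rewrite /cDeltaAB.
set A := [set x | cDiff F c a x == b].
pose T := [set x | inS x || inS (x + a)].
rewrite -(cardsID T A).
have -> : 5%N = (3 + 2)%N by [].
apply: leq_add.
  pose phi x := if inS x then x else x + a.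
  have inj : {in A :&: T &, injective phi}.
    move=> x y; rewrite !inE /phi => /andP [/eqP hx tx] /andP [/eqP hy ty].
    case: (eqVneq a 0) => [->|a0].
      by rewrite !addr0; case: ifP; case: ifP.
    case: ifP => sx; case: ifP => sy // e.
    - exfalso; apply: (pair_excl a0 hy); by rewrite -e.
    - exfalso; apply: (pair_excl a0 hx); by rewrite e.
    - exact: addIr e.
  rewrite -(card_in_imset inj).
  apply: leq_trans (card_size [:: 0; 1; g]).
  apply: subset_leq_card; apply/subsetP => y /imsetP [x]; rewrite !inE => /andP [_ tx] ->.
  rewrite /phi; case: ifP => sx.
    by move: sx; rewrite /inS -!orbA.
  by move: tx; rewrite sx /= /inS -!orbA.
have -> : A :\: T = [set x | [&& cDiff F c a x == b, ~~ inS x & ~~ inS (x + a)]].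
  by apply/setP => x; rewrite !inE negb_or; case: (cDiff _ _ _ _ == b); case: (inS x); case: (inS (x + a)).
apply: card_quad (_ : (b != 0) || (b * a - 1 - c != 0) || (- (c * a) != 0)) _.
  case: (eqVneq b 0) => [->|] //=; rewrite mul0r sub0r -opprD oppr_eq0.
  apply/orP; left; apply: contra c1; rewrite addrC addr_eq0 => /eqP ->.
  by rewrite -subr_eq0 -opprD oppr_eq0 -mulr2n H2.
move=> x /and3P [/eqP hx sx sxa].
have x0 : x != 0 by move: sx; rewrite /inS; case: eqP.
have xa0 : x + a != 0 by move: sxa; rewrite /inS; case: eqP.
move: hx; rewrite /cDiff /Fswap /Inv !cyc3_notS // => <-.
by field; rewrite x0 xa0.
Qed.

End Upper.
Definition quad (K : ringType) (p : K * K * K) (t : K) := p.1.1 * t ^+ 2 + p.1.2 * t + p.2.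

Lemma avoid_quads (K : finFieldType) (s : seq (K * K * K)) :
  (forall p, p \in s -> (p.1.1 != 0) || (p.1.2 != 0) || (p.2 != 0)) ->
  (2 * size s < #|K|)%N ->
  exists t, forall p, p \in s -> quad p t != 0.
Proof.
move=> nz hs.
have hB : (#|[set t | has (fun p => quad p t == 0%R) s]| <= 2 * size s)%N.
  elim: s nz {hs} => [|p s IH] nz.
    by rewrite (_ : [set t | _] = set0) ?cards0 //; apply/setP => t; rewrite !inE.
  rewrite (_ : [set t | _] = [set t | quad p t == 0] :|: [set t | has (fun p => quad p t == 0%R) s]); last first.
    by apply/setP => t; rewrite !inE.
  rewrite /= mulnS (leq_trans (leq_card_setU _ _)) // leq_add //.
    apply: card_quad (nz p (mem_head _ _)) _ => x /eqP; done.
  by apply: IH => q qs; apply: nz; rewrite inE qs orbT.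
have [t tB] : exists t, t \notin [set t | has (fun p => quad p t == 0%R) s].
  apply/existsP; rewrite -negb_forall; apply/negP => /forallP hall.
  have : (#|K| <= 2 * size s)%N.
    apply: leq_trans hB; rewrite -cardsT; apply: subset_leq_card; apply/subsetP => x _; exact: hall.
  by rewrite leqNgt hs.
exists t => p ps; move: tB; rewrite inE => /hasPn; exact.
Qed.

Lemma three_le (K : finType) (A : {set K}) x y z :
  x \in A -> y \in A -> z \in A -> x != y -> x != z -> y != z -> (3 <= #|A|)%N.
Proof.
move=> xA yA zA xy xz yz.
have u : uniq [:: x; y; z] by rewrite /= !inE negb_or xy xz yz.
rewrite -[3%N]/(size [:: x; y; z]) -(card_uniqP u).
by apply: subset_leq_card; apply/subsetP => w; rewrite !inE => /or3P [] /eqP ->.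
Qed.

Section Lower5.
Variables (K : finFieldType) (g c : K).
Hypotheses (H2 : 2%:R = 0 :> K) (g0 : g != 0) (g1 : g != 1) (c0 : c != 0) (c1 : c != 1).
Hypothesis (HK : (29 <= #|K|)%N).

Local Notation F := (Fswap g).

Lemma frac_notS N D : D != 0 -> N != 0 -> N != D -> N != g * D -> ~~ inS g (N / D).
Proof.
move=> D0 N0 ND NgD; rewrite /inS !negb_or.
rewrite mulf_eq0 invr_eq0 negb_or N0 D0 /=.
apply/andP; split.
  by apply: contra_neq ND => h; rewrite -(divfK D0 N) h mul1r.
by apply: contra_neq NgD => h; rewrite -(divfK D0 N) h.
Qed.

Lemma lower5 : exists a b, (3 <= cDeltaAB F c a b)%N.
Proof.
pose s : seq (K * K * K) :=
  [:: (0, 1, 0); (-c, g - c, -1); (-c, 1 - c, -1); (0, 1, 1); (g * c - c, g * c - c, -1);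
      (-c, g - c, g - 1); (-c, 1 - c, 0); (0, c, 1); (-c, g * c - c, g - 1); (-c, 0, 0);
      (g * c - c, g - c, -1); (0, 1 - c, -1); (c, 0, -1); (c, c, 1)].
have [t ht] : exists t, forall p, p \in s -> quad p t != 0.
  apply: avoid_quads; last by rewrite /=; apply: leq_trans HK.
  move=> p; rewrite !inE => /or4P [/eqP->|/eqP->|/eqP->|/or4P [/eqP->|/eqP->|/eqP->|/or4P [/eqP->|/eqP->|/eqP->|/or4P [/eqP->|/eqP->|/eqP->|/orP [/eqP->|/eqP->]]]]];
  by rewrite /= ?oppr_eq0 ?oner_eq0 ?c0 ?eqxx ?orbT.
pose D := 1 + c * t + c * t ^+ 2.
have hq : forall p, p \in s -> forall e, quad p t = e -> e != 0.
  by move=> p ps e <-; exact: ht.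
have f1 : t != 0 by apply: (hq (0, 1, 0)); [rewrite !inE eqxx | rewrite /quad /=; ring].
have f2 : g * t - D != 0 by apply: (hq (-c, g - c, -1)); [rewrite !inE eqxx ?orbT | rewrite /quad /D /=; ring].
have f3 : t - D != 0 by apply: (hq (-c, 1 - c, -1)); [rewrite !inE eqxx ?orbT | rewrite /quad /D /=; ring].
have f4 : 1 + t != 0 by apply: (hq (0, 1, 1)); [rewrite !inE eqxx ?orbT | rewrite /quad /D /=; ring].
have f5 : g * c * t * (1 + t) - D != 0 by apply: (hq (g * c - c, g * c - c, -1)); [rewrite !inE eqxx ?orbT | rewrite /quad /D /=; ring].
have f6 : g * (1 + t) - D != 0 by apply: (hq (-c, g - c, g - 1)); [rewrite !inE eqxx ?orbT | rewrite /quad /D /=; ring].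
have f7 : 1 + t - D != 0 by apply: (hq (-c, 1 - c, 0)); [rewrite !inE eqxx ?orbT | rewrite /quad /D /=; ring].
have f8 : 1 + c * t != 0 by apply: (hq (0, c, 1)); [rewrite !inE eqxx ?orbT | rewrite /quad /D /=; ring].
have f9 : g * (1 + c * t) - D != 0 by apply: (hq (-c, g * c - c, g - 1)); [rewrite !inE eqxx ?orbT | rewrite /quad /D /=; ring].
have f10 : 1 + c * t - D != 0 by apply: (hq (-c, 0, 0)); [rewrite !inE eqxx ?orbT | rewrite /quad /D /=; ring].
have f11 : g * t * (1 + c * t) - D != 0 by apply: (hq (g * c - c, g - c, -1)); [rewrite !inE eqxx ?orbT | rewrite /quad /D /=; ring].
have f12 : t * (1 + c * t) - D != 0 by apply: (hq (0, 1 - c, -1)); [rewrite !inE eqxx ?orbT | rewrite /quad /D /=; ring].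
have f13 : c * t * (1 + t) - (1 + c * t) != 0 by apply: (hq (c, 0, -1)); [rewrite !inE eqxx ?orbT | rewrite /quad /D /=; ring].
have f14 : D != 0 by apply: (hq (c, c, 1)); [rewrite !inE eqxx ?orbT | rewrite /quad /D /=; ring].
pose v := g * t / D; pose a := g * (1 + t) * (1 + c * t) / D.
pose x1 := g * c * t * (1 + t) / D; pose x2 := g * (1 + c * t) / D.
pose u := g * (1 + t) / D; pose w2 := g * t * (1 + c * t) / D.
have I1 : g + a = v by apply: (mulIf f14); rewrite mulrDl /a /v !divfK // /D; ring: H2.
have I2 : x1 + a = u by apply: (mulIf f14); rewrite mulrDl /a /x1 /u !divfK // /D; ring: H2.
have I3 : x2 + a = w2 by apply: (mulIf f14); rewrite mulrDl /a /x2 /w2 !divfK // /D; ring: H2.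
have nzr : forall x y : K, x - y != 0 -> x != y by move=> x y; rewrite subr_eq0.
have sv : ~~ inS g v.
  apply: frac_notS f14 (mulf_neq0 g0 f1) (nzr _ _ f2) _.
  by apply: nzr; rewrite -mulrBr mulf_neq0.
have sx1 : ~~ inS g x1.
  apply: frac_notS f14 _ (nzr _ _ f5) _.
    by rewrite !mulf_neq0.
  by apply: nzr; rewrite (_ : _ - _ = - g) ?oppr_eq0 // /D; ring.
have su : ~~ inS g u.
  apply: frac_notS f14 (mulf_neq0 g0 f4) (nzr _ _ f6) _.
  by apply: nzr; rewrite -mulrBr mulf_neq0.
have sx2 : ~~ inS g x2.
  apply: frac_notS f14 (mulf_neq0 g0 f8) (nzr _ _ f9) _.
  by apply: nzr; rewrite -mulrBr mulf_neq0.
have sw2 : ~~ inS g w2.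
  apply: frac_notS f14 (mulf_neq0 (mulf_neq0 g0 f1) f8) (nzr _ _ f11) _.
  by apply: nzr; rewrite -mulrA -mulrBr mulf_neq0.
have Fg : F g = 0.
  by rewrite /Fswap /Inv /cyc3 (negbTE g0) (negbTE g1) eqxx invr0.
have Fn : forall y, ~~ inS g y -> F y = y^-1.
  by move=> y sy; rewrite /Fswap /Inv cyc3_notS.
exists a, v^-1.
have nS : forall y, ~~ inS g y -> y != g by move=> y; apply: contra => /eqP ->; rewrite /inS eqxx !orbT.
rewrite /cDeltaAB; apply: (three_le (x := g) (y := x1) (z := x2)).
- by rewrite inE /cDiff I1 Fg mulr0 addr0 Fn.
- rewrite inE /cDiff I2 !Fn //; apply/eqP; rewrite /u /x1 /v /D.
  by field; rewrite ?f14 ?f1 ?f4 ?g0 ?c0.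
- rewrite inE /cDiff I3 !Fn //; apply/eqP; rewrite /w2 /x2 /v /D.
  by field; rewrite ?f14 ?f1 ?f8 ?g0 ?c0.
- by rewrite eq_sym nS.
- by rewrite eq_sym nS.
- apply: nzr; rewrite /x1 /x2 -mulrBl (_ : _ - _ = g * (c * t * (1 + t) - (1 + c * t))); last by ring.
  by rewrite !mulf_neq0 // invr_eq0.
Qed.

End Lower5.

Definition B4 := (bool * bool * bool * bool)%type.
Definition bx (u v : B4) : B4 :=
  let '(a0, a1, a2, a3) := u in let '(b0, b1, b2, b3) := v in
  (xorb a0 b0, xorb a1 b1, xorb a2 b2, xorb a3 b3).
Definition bz : B4 := (false, false, false, false).
Definition bo : B4 := (true, false, false, false).
Definition bsh (u : B4) : B4 := let '(a0, a1, a2, a3) := u in (a3, xorb a0 a3, a1, a2).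
Definition bsel (b : bool) (u : B4) := if b then u else bz.
Definition bm (u v : B4) : B4 :=
  let '(b0, b1, b2, b3) := v in
  bx (bx (bsel b0 u) (bsel b1 (bsh u))) (bx (bsel b2 (bsh (bsh u))) (bsel b3 (bsh (bsh (bsh u))))).
Definition all16 : seq B4 :=
  [:: (false,false,false,false); (true,false,false,false); (false,true,false,false); (true,true,false,false); (false,false,true,false); (true,false,true,false); (false,true,true,false); (true,true,true,false); (false,false,false,true); (true,false,false,true); (false,true,false,true); (true,true,false,true); (false,false,true,true); (true,false,true,true); (false,true,true,true); (true,true,true,true)].
Definition eqb4 (u v : B4) : bool :=
  let '(a0, a1, a2, a3) := u in let '(b0, b1, b2, b3) := v in
  [&& eqb a0 b0, eqb a1 b1, eqb a2 b2 & eqb a3 b3].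
Lemma eqb4E u v : eqb4 u v = (u == v).
Proof.
case: u => [[[a0 a1] a2] a3]; case: v => [[[b0 b1] b2] b3] /=.
by rewrite !xpair_eqE; case: a0; case: b0; case: a1; case: b1; case: a2; case: b2; case: a3; case: b3.
Qed.
Definition binv (u : B4) : B4 := head bz [seq v <- all16 | eqb4 (bm u v) bo].
Definition bcyc (g x : B4) := if eqb4 x bz then bo else if eqb4 x bo then g else if eqb4 x g then bz else x.
Definition bF g x := binv (bcyc g x).
Definition bD g c a x := bx (bF g (bx x a)) (bm c (bF g x)).
Definition good g c :=
  has (fun a => let vals := map (bD g c a) all16 in
     has (fun v => (2 < count (eqb4 v) vals)%N) vals) all16.

Lemma mem_all16 u : u \in all16.
Proof. by case: u => [[[[] []] []] []]. Qed.

Lemma binv_ok : all (fun u => eqb4 u bz || eqb4 (bm u (binv u)) bo) all16.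
Proof. by vm_compute. Qed.

Lemma good_ok : all (fun g => all (fun c =>
   [|| eqb4 g bz, eqb4 g bo, eqb4 c bz, eqb4 c bo | good g c]) all16) all16.
Proof. by vm_compute. Qed.

Section GF16.
Variables (K : finFieldType) (r : K).
Hypotheses (H2 : 2%:R = 0 :> K) (hr : r ^+ 4 = r + 1).

Definition emb (u : B4) : K :=
  let '(a0, a1, a2, a3) := u in a0%:R + a1%:R * r + a2%:R * r ^+ 2 + a3%:R * r ^+ 3.

Lemma natr_xor (a b : bool) : (xorb a b)%:R = a%:R + b%:R :> K.
Proof. by case: a; case: b => /=; ring: H2. Qed.

Lemma emb_bx u v : emb (bx u v) = emb u + emb v.
Proof.
case: u => [[[a0 a1] a2] a3]; case: v => [[[b0 b1] b2] b3] /=.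
rewrite !natr_xor; ring.
Qed.

Lemma emb_bz : emb bz = 0.
Proof. by rewrite /= !mul0r !addr0. Qed.

Lemma emb_bo : emb bo = 1.
Proof. by rewrite /= !mul0r !addr0. Qed.

Lemma emb_sh u : emb (bsh u) = emb u * r.
Proof.
case: u => [[[a0 a1] a2] a3] /=; rewrite !natr_xor; ring: hr.
Qed.

Lemma emb_sel b u : emb (bsel b u) = b%:R * emb u.
Proof. by case: b; rewrite /= ?emb_bz; ring. Qed.

Lemma emb_bm u v : emb (bm u v) = emb u * emb v.
Proof.
case: v => [[[b0 b1] b2] b3].
rewrite /bm !emb_bx !emb_sel !emb_sh /=; ring.
Qed.

Lemma emb0 w : emb w = 0 -> w = bz.
Proof.
move=> h; have := binv_ok; move/allP/(_ w (mem_all16 w)).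
rewrite eqb4E; case/orP => [/eqP //|].
rewrite eqb4E => /eqP /(congr1 emb); rewrite emb_bm h mul0r emb_bo => /esym/eqP.
by rewrite oner_eq0.
Qed.

Lemma bx_eq u v : bx u v = bz -> u = v.
Proof.
by case: u => [[[[] []] []] []]; case: v => [[[[] []] []] []].
Qed.

Lemma m1 : -1 = 1 :> K.
Proof. by apply/eqP; rewrite -subr_eq0 -opprD oppr_eq0 -mulr2n H2. Qed.

Lemma emb_inj : injective emb.
Proof.
move=> u v h; apply: bx_eq; apply: emb0.
by rewrite emb_bx h -[X in _ + X]mul1r -m1 mulN1r subrr.
Qed.

Lemma emb_eq u v : (emb u == emb v) = (u == v).
Proof. by apply/eqP/eqP => [/emb_inj|->]. Qed.

Lemma emb_inv u : emb (binv u) = (emb u)^-1.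
Proof.
have := binv_ok; move/allP/(_ u (mem_all16 u)).
rewrite !eqb4E; case/orP => [/eqP ->|/eqP h].
  by rewrite emb_bz invr0 /binv /=.
by rewrite (mulr1_eq (_ : emb u * emb (binv u) = 1)) // -emb_bm h emb_bo.
Qed.

Lemma emb_cyc g x : emb (bcyc g x) = cyc3 (emb g) (emb x).
Proof.
rewrite /bcyc /cyc3 -emb_bz -emb_bo !emb_eq !eqb4E.
by case: ifP => _ //; case: ifP => _ //; case: ifP.
Qed.

Lemma emb_D g c a x :
  emb (bD g c a x) = cDiff (Fswap (emb g)) (emb c) (emb a) (emb x).
Proof.
by rewrite /bD /cDiff /Fswap /Inv emb_bx /bF !emb_inv !emb_cyc emb_bm emb_inv emb_cyc emb_bx.
Qed.

End GF16.

Lemma exists_r (K : finFieldType) (H2 : 2%:R = 0 :> K) (HK : #|K| = 16%N) :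
  exists r : K, r ^+ 4 = r + 1.
Proof.
have h16 y : y ^+ 16 = y :> K by rewrite -[16%N]HK expf_card.
pose qq (y : K) := y + y ^+ 2 + y ^+ 3 + y ^+ 4 + y ^+ 6 + y ^+ 8 + y ^+ 9 + y ^+ 12.
have key y : (y ^+ 4 - y - 1) * qq y = 0.
  transitivity (y ^+ 16 + y + 2%:R * (- (y + y ^+ 2 + y ^+ 3 + y ^+ 4 + y ^+ 9))).
    by rewrite /qq; ring.
  by rewrite H2 mul0r addr0 h16 -mulr2n -mulr_natl H2 mul0r.
case: (boolP [exists r : K, r ^+ 4 == r + 1]) => [/existsP [r /eqP hr]|]; first by exists r.
rewrite negb_exists => /forallP hn.
pose qp : {poly K} := \poly_(i < 13) (nth 0 [:: 0; 1; 1; 1; 1; 0; 1; 0; 1; 1; 0; 0; 1] i).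
have qpE y : qp.[y] = qq y.
  by rewrite horner_poly !big_ord_recr big_ord0 /= /qq; ring.
have qp0 : qp != 0.
  apply/negP => /eqP h; have := congr1 (fun q : {poly K} => q`_12) h.
  by rewrite coef_poly /= coef0 => /eqP; rewrite oner_eq0.
have := max_poly_roots qp0 (rs := enum K); rewrite enum_uniq.
have -> : all (root qp) (enum K).
  apply/allP => y _; rewrite /root qpE.
  have := key y; move/eqP; rewrite mulf_eq0 => /orP [|//].
  rewrite subr_eq0 subr_eq => /eqP e; move: (hn y); by rewrite e addrC eqxx.
move=> /(_ isT isT); rewrite -cardE HK => h.
by have := leq_trans h (size_poly _ _).
Qed.

Lemma uniq_le_card (T : finType) (A : {set T}) (s : seq T) :
  uniq s -> (forall x, x \in s -> x \in A) -> (size s <= #|A|)%N.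
Proof.
move=> u h; rewrite -(card_uniqP u); apply: subset_leq_card; apply/subsetP => x; exact: h.
Qed.

Lemma lower4 (K : finFieldType) (g c : K) (H2 : 2%:R = 0 :> K) (HK : #|K| = 16%N) :
  g != 0 -> g != 1 -> c != 0 -> c != 1 ->
  exists a b, (3 <= cDeltaAB (Fswap g) c a b)%N.
Proof.
move=> g0 g1 c0 c1.
have [r hr] := exists_r H2 HK.
have bij : bijective (emb r).
  apply: inj_card_bij (emb_inj H2 hr) _.
  by rewrite HK !card_prod !card_bool.
case: bij => f fK Kf.
have := good_ok; move/allP/(_ (f g) (mem_all16 _))/allP/(_ (f c) (mem_all16 _)).
rewrite !eqb4E -!(emb_eq H2 hr) (emb_bz r) (emb_bo r) !Kf.
rewrite (negbTE g0) (negbTE g1) (negbTE c0) (negbTE c1) /=.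
case/hasP => a _ /hasP [v /mapP [y _ ->] hv].
exists (emb r a), (emb r (bD (f g) (f c) a y)).
apply: leq_trans hv _.
rewrite count_map -size_filter -(size_map (emb r)) /cDeltaAB.
apply: uniq_le_card.
  rewrite (map_inj_uniq (emb_inj H2 hr)); apply: filter_uniq; by [].
move=> z /mapP [x]; rewrite mem_filter => /andP [/= e _] ->.
rewrite inE -{1}(Kf g) -{1}(Kf c) -emb_D // emb_eq //.
by rewrite eqb4E eq_sym in e.
Qed.

Unset Implicit Arguments.

Theorem mainTheorem6 (K : finFieldType) (n : nat) (c g : K) :
  (4 <= n)%N -> #|K| = (2 ^ n)%N ->
  c != 0 -> c != 1 -> g != 0 -> g != 1 ->
  (3 <= cDelta (Fswap g) c <= 5)%N.
Proof.
move=> n4 HK c0 c1 g0 g1.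
have H2 : 2%:R = 0 :> K by apply: pcharf0; apply: (card_finPcharP HK).
apply/andP; split.
  have [a [b hab]] : exists a b, (3 <= cDeltaAB (Fswap g) c a b)%N.
    move: n4; rewrite leq_eqVlt => /orP [/eqP n4|n5].
      by apply: lower4 => //; rewrite HK -n4.
    apply: lower5 => //; rewrite HK.
    by apply: leq_trans (_ : 2 ^ 5 <= 2 ^ n)%N; rewrite // leq_exp2l.
  apply: leq_trans hab _.
  by apply: (@leq_bigmax_cond _ _ (fun ab : K * K => cDeltaAB (Fswap g) c ab.1 ab.2) (a, b)); rewrite /= c1.
apply/bigmax_leqP => ab _.
by apply: upper.
Qed.
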